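(* Let $L$ be an even hyperbolic lattice and $M$ an even negative definite lattice, and view $\mathbb H_L$ as the subset of $\mathbb H_{L\oplus M}$ consisting of vectors with zero projection onto $M\otimes\mathbb R$. Then there are chambers $\mathcal D_L$ of $L$ and $\mathcal D_{L\oplus M}$ of $L\oplus M$ such that $\overline{\mathcal D_L}=\overline{\mathcal D_{L\oplus M}}\cap\mathbb H_L$ (closures taken in $\mathbb H_L$, resp. $\mathbb H_{L\oplus M}$).
   Context: All lattices are even: a lattice is a free $\mathbb Z$-module $L$ of finite rank with a non-degenerate symmetric bilinear form $(x.y)\in\mathbb Z$ such that $x^2:=(x.x)$ is even for all $x$. $L$ is hyperbolic if its signature is $(1,\mathrm{rk}L-1)$. A root is a vector $r\in L$ with $r^2=-2$. For hyperbolic $L$, fix a connected component $\mathcal P_L$ of $\{x\in L\otimes\mathbb R: x^2>0\}$ and let $\mathbb H_L=\{x\in\mathcal P_L: x^2=1\}$ (for $L\oplus M$ take the component containing $\mathcal P_L$). The chambers are the connected components of $\mathbb H_L\setminus\bigcup_r r^\perp$ (union over all roots $r$ of $L$). *)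

(* Defs.v *)
From HB Require Import structures.
From mathcomp Require Import all_boot all_order all_algebra.
From mathcomp Require Import all_classical all_reals all_analysis.
Set Implicit Arguments. Unset Strict Implicit. Unset Printing Implicit Defensive.
Import Order.TTheory GRing.Theory Num.Theory.
Import numFieldNormedType.Exports.
Local Open Scope ring_scope.
Local Open Scope classical_set_scope.

(* A lattice of rank n is Z^n with Gram matrix G : 'M[int]_n. *)

Definition zform (n : nat) (G : 'M[int]_n) (x y : 'rV[int]_n) : int :=
  (x *m G *m y^T) ord0 ord0.

Definition rform (R : realType) (n : nat) (G : 'M[int]_n) (x y : 'rV[R]_n) : R :=
  (x *m map_mx intr G *m y^T) ord0 ord0.

Definition even_lattice (n : nat) (G : 'M[int]_n) : Prop :=
  G^T = G /\ \det G != 0 /\ forall x : 'rV[int]_n, (2 %| zform G x x)%Z.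

Definition pos_def_subspace (R : realType) (n k : nat) (G : 'M[int]_n)
    (A : 'M[R]_(k, n)) : Prop :=
  row_free A /\ forall v : 'rV[R]_k, v != 0 -> 0 < rform G (v *m A) (v *m A).

(* signature (1, n-1): non-degenerate (part of even_lattice) and the maximal
   dimension of a positive definite subspace of L (x) R is 1 *)
Definition hyperbolic (R : realType) (n : nat) (G : 'M[int]_n) : Prop :=
  (exists A : 'M[R]_(1, n), pos_def_subspace G A) /\
  ~ (exists A : 'M[R]_(2, n), pos_def_subspace G A).

Definition neg_definite (R : realType) (m : nat) (H : 'M[int]_m) : Prop :=
  forall x : 'rV[R]_m, x != 0 -> rform H x x < 0.

Definition gram_sum (n m : nat) (G : 'M[int]_n) (H : 'M[int]_m) : 'M[int]_(n + m) :=
  block_mx G 0 0 H.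

Definition pos_cone (R : realType) (n : nat) (G : 'M[int]_n) : set 'rV[R]_n :=
  [set x | 0 < rform G x x].

Definition is_pos_component (R : realType) (n : nat) (G : 'M[int]_n)
    (P : set 'rV[R]_n) : Prop :=
  exists x0, pos_cone G x0 /\ P = connected_component (pos_cone G) x0.

Definition hyp_space (R : realType) (n : nat) (G : 'M[int]_n) (P : set 'rV[R]_n)
    : set 'rV[R]_n :=
  [set x | P x /\ rform G x x = 1].

Definition is_root (n : nat) (G : 'M[int]_n) (r : 'rV[int]_n) : Prop :=
  zform G r r = - 2.

Definition chamber_domain (R : realType) (n : nat) (G : 'M[int]_n)
    (P : set 'rV[R]_n) : set 'rV[R]_n :=
  [set x | hyp_space G P x /\
     forall r : 'rV[int]_n, is_root G r -> rform G (map_mx intr r) x != 0].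

Definition is_chamber (R : realType) (n : nat) (G : 'M[int]_n)
    (P : set 'rV[R]_n) (D : set 'rV[R]_n) : Prop :=
  exists x, chamber_domain G P x /\ D = connected_component (chamber_domain G P) x.

(* closure of A taken in the subspace S (= ambient closure intersected with S) *)
Definition closure_in (R : realType) (n : nat) (S A : set 'rV[R]_n) : set 'rV[R]_n :=
  closure A `&` S.

Definition emb (R : realType) (n m : nat) (x : 'rV[R]_n) : 'rV[R]_(n + m) :=
  row_mx x 0.

(* Main.v *)
Require Import Defs.
From HB Require Import structures.
From mathcomp Require Import all_boot all_order all_algebra.
From mathcomp Require Import all_classical all_reals all_analysis.
From mathcomp Require Import ring lra zify.
Import Order.TTheory GRing.Theory Num.Theory.
Import numFieldNormedType.Exports.
Set Implicit Arguments. Unset Strict Implicit. Unset Printing Implicit Defensive.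
Local Open Scope ring_scope.
Local Open Scope classical_set_scope.

Section Alg.
Variable R : realType.

Lemma rformDl k (G : 'M[int]_k) (x y z : 'rV[R]_k) :
  rform G (x + y) z = rform G x z + rform G y z.
Proof. by rewrite /rform !mulmxDl mxE. Qed.

Lemma rformZl k (G : 'M[int]_k) (a : R) (x z : 'rV[R]_k) :
  rform G (a *: x) z = a * rform G x z.
Proof. by rewrite /rform -!scalemxAl mxE. Qed.

Lemma rformDr k (G : 'M[int]_k) (x y z : 'rV[R]_k) :
  rform G z (x + y) = rform G z x + rform G z y.
Proof. by rewrite /rform linearD /= mulmxDr mxE. Qed.

Lemma rformZr k (G : 'M[int]_k) (a : R) (x z : 'rV[R]_k) :
  rform G z (a *: x) = a * rform G z x.
Proof. by rewrite /rform linearZ /= -scalemxAr mxE. Qed.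

Lemma rform0l k (G : 'M[int]_k) (z : 'rV[R]_k) : rform G 0 z = 0.
Proof. by rewrite /rform !mul0mx mxE. Qed.

Lemma rform0r k (G : 'M[int]_k) (z : 'rV[R]_k) : rform G z 0 = 0.
Proof. by rewrite /rform trmx0 mulmx0 mxE. Qed.

Lemma rformNl k (G : 'M[int]_k) (x z : 'rV[R]_k) : rform G (- x) z = - rform G x z.
Proof. by rewrite -scaleN1r rformZl mulN1r. Qed.

Lemma rformNr k (G : 'M[int]_k) (x z : 'rV[R]_k) : rform G z (- x) = - rform G z x.
Proof. by rewrite -scaleN1r rformZr mulN1r. Qed.

Lemma rformBl k (G : 'M[int]_k) (x y z : 'rV[R]_k) :
  rform G (x - y) z = rform G x z - rform G y z.
Proof. by rewrite rformDl rformNl. Qed.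

Lemma rformBr k (G : 'M[int]_k) (x y z : 'rV[R]_k) :
  rform G z (x - y) = rform G z x - rform G z y.
Proof. by rewrite rformDr rformNr. Qed.

Lemma rformC k (G : 'M[int]_k) (x y : 'rV[R]_k) : G^T = G ->
  rform G x y = rform G y x.
Proof.
move=> sG; rewrite /rform.
transitivity (((x *m map_mx intr G *m y^T)^T) ord0 ord0); first by rewrite [RHS]mxE.
by rewrite !trmx_mul trmxK map_trmx sG mulmxA.
Qed.

Lemma rform_int k (G : 'M[int]_k) (r s : 'rV[int]_k) :
  rform G (map_mx intr r) (map_mx intr s) = (zform G r s)%:~R :> R.
Proof.
rewrite /rform /zform map_trmx -!map_mxM.
by rewrite mxE.
Qed.

Lemma rform_block n m (G : 'M[int]_n) (H : 'M[int]_m) (a c : 'rV[R]_n) (b d : 'rV[R]_m) :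
  rform (gram_sum G H) (row_mx a b) (row_mx c d) = rform G a c + rform H b d.
Proof.
rewrite /rform /gram_sum map_block_mx mul_row_block tr_row_mx mul_row_col.
by rewrite !map_mx0 !mulmx0 ?mul0mx addr0 add0r mxE.
Qed.

Lemma zform_block n m (G : 'M[int]_n) (H : 'M[int]_m) (a c : 'rV[int]_n) (b d : 'rV[int]_m) :
  zform (gram_sum G H) (row_mx a b) (row_mx c d) = zform G a c + zform H b d.
Proof.
rewrite /zform /gram_sum mul_row_block tr_row_mx mul_row_col.
by rewrite !mulmx0 ?mul0mx addr0 add0r mxE.
Qed.

Lemma rformE k (G : 'M[int]_k) (x y : 'rV[R]_k) :
  rform G x y = \sum_j \sum_i x ord0 i * (G i j)%:~R * y ord0 j.
Proof.
rewrite /rform mxE; apply: eq_bigr => j _; rewrite !mxE big_distrl /=.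
by apply: eq_bigr => i _; rewrite !mxE.
Qed.

End Alg.


Section Hyp.
Variable R : realType.

Lemma sqr_pos (a : R) : a != 0 -> 0 < a ^+ 2.
Proof. by move=> ha; rewrite lt_def sqrf_eq0 ha sqr_ge0. Qed.

Lemma quadE k (G : 'M[int]_k) (a b : R) (u v : 'rV[R]_k) : G^T = G ->
  rform G (a *: u + b *: v) (a *: u + b *: v) =
  a ^+ 2 * rform G u u + 2 * a * b * rform G u v + b ^+ 2 * rform G v v.
Proof.
move=> sG; rewrite !(rformDl, rformDr, rformZl, rformZr) (@rformC _ _ G v u sG).
by ring.
Qed.

Lemma rowfree_of_pos k p (G : 'M[int]_k) (A : 'M[R]_(p, k)) :
  (forall v : 'rV[R]_p, v != 0 -> 0 < rform G (v *m A) (v *m A)) -> row_free A.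
Proof.
move=> H; rewrite -kermx_eq0; apply/eqP/row_matrixP => i; rewrite row0.
apply/eqP; apply: contraT => hv; have := H _ hv.
by rewrite -row_mul mulmx_ker row0 rform0l ltxx.
Qed.

Lemma ord2_cases (j : 'I_2) : j = ord0 \/ j = lift ord0 ord0.
Proof. by case: j => [[|[|j]] Hj] //; [left|right]; apply: val_inj. Qed.

Lemma nopos2 k (G : 'M[int]_k) (u v : 'rV[R]_k) : hyperbolic R G ->
  ~ (forall a b : R, (a != 0) || (b != 0) ->
       0 < rform G (a *: u + b *: v) (a *: u + b *: v)).
Proof.
move=> [_ H2] Hpos; apply: H2.
pose A : 'M[R]_(2, k) := \matrix_(i < 2, j < k) (if i == ord0 then u ord0 j else v ord0 j).
have AE (w : 'rV[R]_2) : w *m A = w ord0 ord0 *: u + w ord0 (lift ord0 ord0) *: v.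
  by apply/rowP => j; rewrite !mxE big_ord_recl big_ord1 !mxE.
have Hp : forall w : 'rV[R]_2, w != 0 -> 0 < rform G (w *m A) (w *m A).
  move=> w hw; rewrite AE; apply: Hpos.
  apply: contraT; rewrite negb_or !negbK => /andP[/eqP h0 /eqP h1].
  suff : w == 0 by rewrite (negbTE hw).
  apply/eqP/rowP => j; rewrite mxE.
  have [->|->] := ord2_cases j; [exact: h0|exact: h1].
exists A; split; [exact: rowfree_of_pos Hp | exact: Hp].
Qed.

Variables (n : nat) (G : 'M[int]_n).
Hypothesis sG : G^T = G.
Hypothesis hG : hyperbolic R G.

Lemma B1 (x y : 'rV[R]_n) : 0 < rform G x x -> rform G x y = 0 -> rform G y y <= 0.
Proof.
move=> hx hxy; rewrite leNgt; apply/negP => hy.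
apply: (nopos2 (u:=x) (v:=y) hG) => a b hab; rewrite quadE // hxy mulr0 addr0.
case/orP: hab => h.
  have := sqr_pos h; have := sqr_ge0 b; nra.
have := sqr_pos h; have := sqr_ge0 a; nra.
Qed.

Lemma revCS (x a : 'rV[R]_n) : 0 < rform G x x ->
  rform G x x * rform G a a <= rform G a x ^+ 2.
Proof.
move=> hx.
pose y := rform G x x *: a - rform G a x *: x.
have hyx : rform G x y = 0.
  rewrite /y rformBr !rformZr (@rformC _ _ G x a sG); ring.
have := B1 hx hyx.
rewrite /y -scaleNr quadE //.
rewrite (@rformC _ _ G a x sG) => h.
have : rform G x x * (rform G x x * rform G a a - rform G x a ^+ 2) <= 0 by nra.
rewrite pmulr_rle0 // subr_le0 //.
Qed.

End Hyp.


Section Strict.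
Variable R : realType.

Lemma int_even_neg (z : int) : (2 %| z)%Z -> z < 0 -> z <= -2.
Proof. move=> /dvdzP[k ->]; lia. Qed.

Lemma map_int_neq0 k (b : 'rV[int]_k) : b != 0 -> (map_mx intr b : 'rV[R]_k) != 0.
Proof.
move=> hb; apply: contra hb => /eqP h; apply/eqP/rowP => i.
by move/rowP: h => /(_ i); rewrite !mxE => /eqP; rewrite intr_eq0 => /eqP.
Qed.

Variables (n : nat) (G : 'M[int]_n).
Hypothesis sG : G^T = G.
Hypothesis hG : hyperbolic R G.
Hypothesis dG : \det G != 0.

Lemma exists_pair (y : 'rV[R]_n) : y != 0 -> exists z, rform G z y != 0.
Proof.
move=> hy.
pose G' : 'M[R]_n := map_mx intr G.
have uG : G' \in unitmx by rewrite unitmxE unitfE det_map_mx intr_eq0.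
pose c := G' *m y^T.
have hc : c != 0.
  apply: contra hy => /eqP hc; apply/eqP.
  have : y^T = invmx G' *m c by rewrite /c mulKmx.
  by rewrite hc mulmx0 => /(congr1 trmx); rewrite trmxK trmx0.
exists c^T.
have -> : rform G c^T y = \sum_i c i ord0 ^+ 2.
  rewrite /rform -/G' -mulmxA -/c mxE; apply: eq_bigr => i _; by rewrite [c^T _ _]mxE expr2.
apply/negP => /eqP hs.
have h0 := psumr_eq0P (fun i _ => sqr_ge0 (c i ord0)) hs.
move/negP: hc; apply; apply/eqP/matrixP => i j; rewrite (ord1 j) [RHS]mxE.
by have /eqP := h0 i isT; rewrite sqrf_eq0 => /eqP.
Qed.

Lemma B1strict (x y : 'rV[R]_n) : 0 < rform G x x -> rform G x y = 0 ->
  rform G y y = 0 -> y = 0.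
Proof.
move=> hx hxy hyy; apply/eqP; apply: contraT => hy.
have [z hz] := exists_pair hy.
pose z' := rform G x x *: z - rform G z x *: x.
have hz'x : rform G x z' = 0.
  by rewrite /z' rformBr !rformZr (@rformC _ _ G x z sG); ring.
have hcc : rform G z' y != 0.
  rewrite /z' rformBl !rformZl hxy mulr0 subr0 mulf_neq0 //; exact: lt0r_neq0.
pose cc := rform G z' y; pose d := rform G z' z'.
pose e := `|d| + 1.
have he : 0 < e by rewrite /e ltr_pwDr // normr_ge0.
pose t := cc / e.
have hct : cc = t * e by rewrite /t divfK // lt0r_neq0.
have ht : t != 0 by apply: contra hcc => /eqP ht; rewrite -/cc hct ht mul0r.
pose w := 1 *: y + t *: z'.
have hxw : rform G x w = 0 by rewrite /w rformDr !rformZr hxy hz'x; ring.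
have hd : 0 < 2 * e + d by rewrite /e; have := ler_norm (- d); rewrite normrN; have := normr_ge0 d; lra.
have key : rform G w w = t ^+ 2 * (2 * e + d).
  by rewrite /w quadE // hyy (@rformC _ _ G y z' sG) -/cc -/d hct; ring.
have := B1 sG hG hx hxw; rewrite key => hle.
have : 0 < t ^+ 2 * (2 * e + d) by apply: mulr_gt0 => //; exact: sqr_pos.
by rewrite ltNge hle.
Qed.

End Strict.

Section NegDef.
Variable R : realType.
Variables (m : nat) (H : 'M[int]_m).
Hypothesis nH : neg_definite R H.

Lemma negsemi (w : 'rV[R]_m) : rform H w w <= 0.
Proof.
have [->|hw] := eqVneq w 0; first by rewrite rform0l.
exact: ltW (nH hw).
Qed.

Lemma zneg (b : 'rV[int]_m) : even_lattice H -> b != 0 -> zform H b b <= -2.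
Proof.
move=> [_ [_ ev]] hb; apply: int_even_neg => //.
have := nH (map_int_neq0 R hb); rewrite rform_int.
by rewrite ltrz0.
Qed.
End NegDef.


Section Topo.
Variable R : realType.

Lemma cont_sum (T : topologicalType) (I : finType) (F : I -> T -> R) (x : T) :
  (forall i, {for x, continuous (F i)}) -> {for x, continuous (fun t => \sum_i F i t)}.
Proof.
move=> h; rewrite -fct_sumE.
apply: (big_ind (fun f : T -> R => {for x, continuous f})) => //.
- exact: cst_continuous.
- by move=> f g hf hg; apply: continuousD.
Qed.

Lemma cont_rform k (G : 'M[int]_k) (T : topologicalType) (f g : T -> 'rV[R]_k) (x : T) :
  {for x, continuous f} -> {for x, continuous g} ->
  {for x, continuous (fun t => rform G (f t) (g t))}.
Proof.
move=> hf hg.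
have cf i : {for x, continuous (fun t => f t ord0 i)}.
  exact: (continuous_comp hf (@coord_continuous R 1 k ord0 i (f x))).
have cg i : {for x, continuous (fun t => g t ord0 i)}.
  exact: (continuous_comp hg (@coord_continuous R 1 k ord0 i (g x))).
rewrite (_ : (fun t => _) = (fun t => \sum_j \sum_i f t ord0 i * (G i j)%:~R * g t ord0 j)); last first.
  by apply: funext => t; rewrite rformE.
apply: cont_sum => j; apply: cont_sum => i.
apply: continuousM => //; apply: continuousM => //; exact: cst_continuous.
Qed.

Lemma conn_sign (V : topologicalType) (C : set V) (f : V -> R) :
  connected C -> continuous f -> (forall z, C z -> f z != 0) ->
  forall a b, C a -> C b -> 0 < f a -> 0 < f b.
Proof.
move=> cC cf nz a b Ca Cb fa.
have cI : is_interval (f @` C).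
  apply/connected_intervalP; apply: connected_continuous_connected => //.
  exact: continuous_subspaceT.
rewrite lt_def nz //=; rewrite leNgt; apply/negP => fb.
have [z Cz fz0] : (f @` C) 0.
  apply: (cI (f b) (f a)); [by exists b|by exists a|].
  by rewrite (ltW fb) (ltW fa).
by move: (nz z Cz); rewrite fz0 eqxx.
Qed.

Lemma cc_path (V : topologicalType) (A : set V) (g : R -> V) :
  (forall s, 0 <= s <= 1 -> {for s, continuous g} /\ A (g s)) ->
  connected_component A (g 0) (g 1).
Proof.
move=> h.
pose I01 := [set s : R | 0 <= s <= 1].
have cI : connected I01.
  apply/connected_intervalP => x y /andP[x0 x1] /andP[y0 y1] z /andP[xz zy].
  by apply/andP; split; lra.
apply: (@connected_component_max _ A (g @` I01)).
- by exists 0 => //; rewrite /I01 /= lexx ler01.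
- by move=> _ [s /h [_ hs] <-].
- apply: connected_continuous_connected => //.
  apply: continuous_in_subspaceT => s; rewrite inE => /h [].
  by [].
- by exists 1 => //; rewrite /I01 /= lexx ler01.
Qed.

Lemma near0_pos (V : topologicalType) (g : R -> V) (O : set V) :
  {for 0, continuous g} -> nbhs (g 0) O -> exists t, 0 < t /\ O (g t).
Proof.
move=> hg hO.
have : nbhs (0 : R) (g @^-1` O) by exact: hg.
move/nbhs_ballP => [e /= e0 he].
exists (e / 2); split; first by lra.
apply: he; rewrite -ball_normE /= sub0r normrN gtr0_norm; lra.
Qed.

Lemma cont_line k (a b : 'rV[R]_k) (s0 : R) :
  {for s0, continuous (fun s : R => a + s *: b)}.
Proof.
apply: continuousD; first exact: cst_continuous.
apply: continuousZ; last exact: cst_continuous.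
exact: cvg_id.
Qed.

Definition nrm k (G : 'M[int]_k) (v : 'rV[R]_k) := (Num.sqrt (rform G v v))^-1 *: v.

Lemma cont_nrm_line k (G : 'M[int]_k) (a b : 'rV[R]_k) (s0 : R) :
  0 < rform G (a + s0 *: b) (a + s0 *: b) ->
  {for s0, continuous (fun s : R => nrm G (a + s *: b))}.
Proof.
move=> hpos; rewrite /nrm.
apply: continuousZ; last exact: cont_line.
apply: continuousV; first by rewrite gt_eqF // sqrtr_gt0.
have hc := @continuous_comp R _ _ (fun s : R => rform G (a + s *: b) (a + s *: b)) Num.sqrt s0
  (cont_rform (G:=G) (@cont_line k a b s0) (@cont_line k a b s0)) (@sqrt_continuous R _).
exact: hc.
Qed.

Lemma nrm_sq k (G : 'M[int]_k) (v : 'rV[R]_k) : 0 < rform G v v ->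
  rform G (nrm G v) (nrm G v) = 1.
Proof.
move=> hv; rewrite /nrm rformZl rformZr mulrA -expr2 exprVn sqr_sqrtr ?ltW //.
by rewrite mulVf // gt_eqF.
Qed.

Lemma nrm_l k (G : 'M[int]_k) (v y : 'rV[R]_k) :
  rform G (nrm G v) y = (Num.sqrt (rform G v v))^-1 * rform G v y.
Proof. by rewrite /nrm rformZl. Qed.

Lemma nrm_r k (G : 'M[int]_k) (v y : 'rV[R]_k) :
  rform G y (nrm G v) = (Num.sqrt (rform G v v))^-1 * rform G y v.
Proof. by rewrite /nrm rformZr. Qed.

Lemma nrm_coef_gt0 k (G : 'M[int]_k) (v : 'rV[R]_k) : 0 < rform G v v ->
  0 < (Num.sqrt (rform G v v))^-1.
Proof. by move=> hv; rewrite invr_gt0 sqrtr_gt0. Qed.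

Lemma nrm_id k (G : 'M[int]_k) (v : 'rV[R]_k) : rform G v v = 1 -> nrm G v = v.
Proof. by move=> h; rewrite /nrm h sqrtr1 invr1 scale1r. Qed.

End Topo.


Section Gen.
Variable R : realType.

Lemma cont_rform_l k (G : 'M[int]_k) (p : 'rV[R]_k) : continuous (fun z => rform G z p).
Proof. by move=> z; apply: cont_rform; [exact: cvg_id | exact: cst_continuous]. Qed.

Lemma cont_rform_r k (G : 'M[int]_k) (p : 'rV[R]_k) : continuous (fun z => rform G p z).
Proof. by move=> z; apply: cont_rform; [exact: cst_continuous | exact: cvg_id]. Qed.

Lemma line_comb k (p v : 'rV[R]_k) (s : R) : p + s *: (v - p) = (1 - s) *: p + s *: v.
Proof. by apply/rowP => i; rewrite !mxE; ring. Qed.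

Variables (k : nat) (Gk : 'M[int]_k).
Hypothesis sGk : Gk^T = Gk.

Section HPgen.
Variable x0 : 'rV[R]_k.
Hypothesis hx0 : 0 < rform Gk x0 x0.
Hypothesis nz : forall u v : 'rV[R]_k, 0 < rform Gk u u -> 0 < rform Gk v v -> rform Gk u v != 0.

Lemma HPgen p : connected_component (pos_cone Gk) x0 p ->
  forall v, connected_component (pos_cone Gk) x0 v <-> (0 < rform Gk v v /\ 0 < rform Gk v p).
Proof.
move=> Cp v; have Pp : pos_cone Gk p by exact: connected_component_sub Cp.
split.
- move=> Cv; have Pv : pos_cone Gk v by exact: connected_component_sub Cv.
  split => //.
  apply: (@conn_sign _ _ (connected_component (pos_cone Gk) x0) (fun z => rform Gk z p)
           (@component_connected _ _ _) (@cont_rform_l _ _ p) _ p v Cp Cv) => //.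
  by move=> z Cz; apply: nz => //; exact: connected_component_sub Cz.
- move=> [hv hvp]; apply: (connected_component_trans Cp).
  have := cc_path (A := pos_cone Gk) (g := fun s : R => p + s *: (v - p)).
  rewrite scale0r addr0 scale1r [p + _]addrC subrK; apply => s /andP[s0 s1]; split.
    exact: cont_line.
  rewrite /pos_cone /= line_comb quadE // (@rformC _ _ Gk p v sGk).
  have h1 : 0 <= 2 * (1 - s) * s * rform Gk v p.
    have a1 : 0 <= 2 * (1 - s) by lra.
    exact: (mulr_ge0 (mulr_ge0 a1 s0) (ltW hvp)).
  have [s1'|s1'] := ltP s 1.
    have : 0 < (1 - s) ^+ 2 * rform Gk p p by apply: mulr_gt0 => //; apply: sqr_pos; lra.
    have := sqr_ge0 s; nra.
  have -> : s = 1 by lra.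
  lra.
Qed.
End HPgen.

Section Chamber.
Variable Pk : set 'rV[R]_k.
Hypothesis HP : forall p, Pk p -> forall v, Pk v <-> (0 < rform Gk v v /\ 0 < rform Gk v p).
Variable p : 'rV[R]_k.
Hypothesis Cp : chamber_domain Gk Pk p.

Local Notation rt r := (map_mx intr r : 'rV[R]_k).

Lemma pos_comb y (a b : R) : hyp_space Gk Pk y -> 0 < a -> 0 <= b ->
  (forall r, is_root Gk r -> 0 <= rform Gk (rt r) p * rform Gk (rt r) y) ->
  0 < rform Gk (a *: p + b *: y) (a *: p + b *: y) /\
  chamber_domain Gk Pk (nrm Gk (a *: p + b *: y)).
Proof.
move=> [Py y1] a0 b0 hr.
have [[Pp p1] pr] := Cp.
have yp : 0 < rform Gk y p by have [_ ->] := (HP Pp y).1 Py.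
set w := a *: p + b *: y.
have w2 : 0 < rform Gk w w.
  rewrite /w quadE // p1 y1 (@rformC _ _ Gk p y sGk).
  have a1 : 0 <= 2 * a by lra.
  have := mulr_ge0 (mulr_ge0 a1 b0) (ltW yp).
  have : 0 < a ^+ 2 by apply: sqr_pos; lra.
  have := sqr_ge0 b; lra.
have c0 := nrm_coef_gt0 w2.
split => //; split; first split.
- apply/(HP Pp); rewrite nrm_sq //; split => //.
  rewrite nrm_l; apply: mulr_gt0 => //.
  rewrite /w rformDl !rformZl p1; have := mulr_ge0 b0 (ltW yp); lra.
- exact: nrm_sq.
- move=> r hr0; rewrite nrm_r mulf_neq0 //; first exact: lt0r_neq0.
  have := hr r hr0; have := pr r hr0.
  rewrite /w rformDr !rformZr => prn hprod.
  have hpp : 0 < rform Gk (rt r) p ^+ 2 by exact: sqr_pos.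
  have : 0 < rform Gk (rt r) p * (a * rform Gk (rt r) p + b * rform Gk (rt r) y).
    have := mulr_ge0 b0 hprod; have := mulr_gt0 a0 hpp; nra.
  by apply: contraTneq => ->; rewrite mulr0 ltxx.
Qed.

Lemma chamber_closure y : hyp_space Gk Pk y ->
  (closure (connected_component (chamber_domain Gk Pk) p) y <->
   forall r, is_root Gk r -> 0 <= rform Gk (rt r) p * rform Gk (rt r) y).
Proof.
move=> Hy; have [[Pp p1] pr] := Cp.
split.
- move=> cly r hr.
  pose f := fun z => rform Gk (rform Gk (rt r) p *: rt r) z.
  have fE z : f z = rform Gk (rt r) p * rform Gk (rt r) z by rewrite /f rformZl.
  have cf : continuous f by exact: cont_rform_r.
  have sub : connected_component (chamber_domain Gk Pk) p `<=` f @^-1` [set x | 0 <= x].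
    move=> z Dz; rewrite /preimage /=; apply: ltW.
    apply: (@conn_sign _ _ (connected_component (chamber_domain Gk Pk) p) f
           (@component_connected _ _ _) cf _ p z) => //.
    + move=> u Du; have [_ /(_ r hr) hu] := connected_component_sub Du.
      by rewrite fE mulf_neq0 //; exact: pr.
    + exact: connected_component_refl.
    + by rewrite fE -expr2; apply: sqr_pos; exact: pr.
  have cl : closed (f @^-1` [set x | 0 <= x]).
    by apply: closed_comp; [move=> z _; exact: cf | exact: closed_ge].
  have h := closureS sub cly; rewrite -((closure_id _).1 cl) in h.
  by move: h; rewrite /preimage /= fE.
- move=> hw O hO.
  have c0 : {for 0, continuous (fun t : R => nrm Gk (y + t *: p))}.
    by apply: cont_nrm_line; rewrite scale0r addr0; case: Hy => _ ->.
  have g0 : nrm Gk (y + 0 *: p) = y by rewrite scale0r addr0 nrm_id //; case: Hy.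
  have hO2 : nbhs (nrm Gk (y + 0 *: p)) O by rewrite g0.
  have [t [t0 Ot]] := near0_pos c0 hO2.
  exists (nrm Gk (y + t *: p)); split => //.
  have := cc_path (A := chamber_domain Gk Pk) (g := fun s : R => nrm Gk (p + s *: (y + t *: p - p))).
  rewrite scale0r addr0 scale1r [p + _]addrC subrK nrm_id //; apply => s /andP[s0 s1].
  have E : p + s *: (y + t *: p - p) = (1 - s + s * t) *: p + s *: y.
    by apply/rowP => i; rewrite !mxE; ring.
  have a0 : 0 < 1 - s + s * t.
    have := mulr_ge0 s0 (ltW t0).
    have [s1'|s1'] := ltP s 1; first lra.
    have -> : s = 1 by lra.
    lra.
  have [w2 cdw] := pos_comb Hy a0 s0 hw.
  split; last by rewrite E.
  by apply: cont_nrm_line; rewrite E.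
Qed.
End Chamber.
End Gen.


Section Baire.
Variable R : realType.
Variable k : nat.
Definition rvR := 'rV[R]_k.
HB.instance Definition _ := NormedModule.on rvR.
HB.instance Definition _ := Complete.on rvR.

Variable Gk : 'M[int]_k.

Lemma generic_vec : exists w : 'rV[R]_k, forall r : 'rV[int]_k,
  zform Gk r r != 0 -> rform Gk (map_mx intr r) w != 0.
Proof.
pose S (r : 'rV[int]_k) : set rvR :=
  if zform Gk r r != 0 then [set w : rvR | rform Gk (map_mx intr r) w != 0] else setT.
pose F (i : nat) : set rvR := match unpickle i with Some r => S r | None => setT end.
have odS r : open (S r) /\ dense (S r).
  rewrite /S; case: ifP => hr; last by split; [exact: openT | move=> O [x Ox] _; exists x].
  split.
    apply: (@open_comp _ _ (fun w : rvR => rform Gk (map_mx intr r) w) [set x : R | x != 0]).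
      by move=> w _; exact: cont_rform_r.
    exact: open_neq.
  move=> O [d Od] oO.
  have [hd|hd] := eqVneq (rform Gk (map_mx intr r) d) 0; last by exists d.
  have c0 : {for 0, continuous (fun t : R => (d : 'rV[R]_k) + t *: map_mx intr r)}.
    exact: cont_line.
  have hO : nbhs ((d : 'rV[R]_k) + 0 *: map_mx intr r) O.
    by rewrite scale0r addr0; apply: open_nbhs_nbhs; split.
  have [t [t0 Ot]] := near0_pos c0 hO.
  exists (d + t *: map_mx intr r); split => //=.
  rewrite rformDr rformZr hd add0r rform_int mulf_neq0 //; first by rewrite gt_eqF.
  by rewrite intr_eq0.
have odF i : open (F i) /\ dense (F i).
  rewrite /F; case: (unpickle i) => [r|]; first exact: odS.
  by split; [exact: openT | move=> O [x Ox] _; exists x].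
have [|w [_ Fw]] := @Baire R rvR F odF setT _ openT; first by exists 0.
exists w => r hr.
have := Fw (pickle r) I; rewrite /F pickleK /S hr.
by [].
Qed.
End Baire.


Section Misc.
Variable R : realType.

Lemma disc (A B C : R) : C <= 0 ->
  (forall s : R, 1 ^+ 2 * A + 2 * 1 * s * B + s ^+ 2 * C <= 0) -> B ^+ 2 <= A * C.
Proof.
move=> hC h.
have [C0|Cn] := eqVneq C 0.
  rewrite C0 mulr0.
  have [B0|Bn] := eqVneq B 0; first by rewrite B0 expr0n.
  have := h ((`|A| + 1) / (2 * B)); rewrite C0 mulr0 addr0 expr1n mul1r mulr1.
  have -> : 2 * ((`|A| + 1) / (2 * B)) * B = `|A| + 1 by field; rewrite Bn.
  by have := ler_norm (- A); rewrite normrN; lra.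
have Cneg : C < 0 by rewrite lt_neqAle Cn hC.
have := h (- B / C).
have -> : 1 ^+ 2 * A + 2 * 1 * (- B / C) * B + (- B / C) ^+ 2 * C = A - B ^+ 2 / C.
  by field.
move=> hle.
have : (A - B ^+ 2 / C) * C >= 0 by rewrite mulr_le0 // ltW.
have -> : (A - B ^+ 2 / C) * C = A * C - B ^+ 2 by field.
lra.
Qed.

Lemma sq_gt_neg (a b : R) : 0 < b -> a ^+ 2 < b ^+ 2 -> - b < a.
Proof.
move=> hb h; rewrite ltNge; apply/negP => ha.
have : 0 <= (b - a) * (- b - a) by apply: mulr_ge0; lra.
have -> : (b - a) * (- b - a) = a ^+ 2 - b ^+ 2 by ring.
lra.
Qed.

Lemma sign_pert2 (Y X1 X2 : R) : 16 * X1 ^+ 2 < Y ^+ 2 -> 16 * X2 ^+ 2 < Y ^+ 2 ->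
  0 < Y * (Y + X1 + X2).
Proof.
move=> h1 h2.
have hY : 0 < Y ^+ 2 by have := sqr_ge0 X1; lra.
have k1 : (4 * Y * X1) ^+ 2 < (Y ^+ 2) ^+ 2.
  have -> : (4 * Y * X1) ^+ 2 = Y ^+ 2 * (16 * X1 ^+ 2) by ring.
  by rewrite [X in _ < X]expr2 ltr_pM2l.
have k2 : (4 * Y * X2) ^+ 2 < (Y ^+ 2) ^+ 2.
  have -> : (4 * Y * X2) ^+ 2 = Y ^+ 2 * (16 * X2 ^+ 2) by ring.
  by rewrite [X in _ < X]expr2 ltr_pM2l.
have := sq_gt_neg hY k1; have := sq_gt_neg hY k2.
have -> : Y * (Y + X1 + X2) = Y ^+ 2 + Y * X1 + Y * X2 by ring.
lra.
Qed.

Lemma int_sq_ge1 (z : int) : z != 0 -> 1 <= (z%:~R : R) ^+ 2.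
Proof.
move=> hz; rewrite -rmorphXn /= ler1z; lia.
Qed.

Lemma int_pos_ge1 (z : int) : 0 < (z%:~R : R) -> 1 <= (z%:~R : R).
Proof. rewrite ltr0z ler1z; lia. Qed.

End Misc.

Section Approx.
Variable R : realType.
Variables (n : nat) (G : 'M[int]_n).
Hypothesis sG : G^T = G.

Lemma rform_bound (f z : 'rV[R]_n) (c : 'I_n -> R) :
  (forall i, `|f ord0 i| <= 1) -> (forall j, `|z ord0 j| <= c j) ->
  `|rform G f z| <= \sum_j \sum_i `|(G i j)%:~R : R| * c j.
Proof.
move=> hf hz; rewrite rformE.
apply: le_trans (ler_norm_sum _ _ _) _; apply: ler_sum => j _.
apply: le_trans (ler_norm_sum _ _ _) _; apply: ler_sum => i _.
rewrite !normrM.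
rewrite -mulrA; apply: le_trans (_ : _ <= `|(G i j)%:~R : R| * `|z ord0 j|) _.
  by apply: ler_piMl; [rewrite mulr_ge0 | exact: hf].
by apply: ler_wpM2l => //; exact: hz.
Qed.

Lemma int_approx (x : 'rV[R]_n) : 0 < rform G x x ->
  exists q : 'rV[int]_n, 0 < rform G (map_mx intr q : 'rV[R]_n) (map_mx intr q) /\
                          0 < rform G (map_mx intr q : 'rV[R]_n) x.
Proof.
move=> hx; set X := rform G x x.
pose c (j : 'I_n) := `|x ord0 j| + 1.
pose K := \sum_j \sum_i `|(G i j)%:~R : R| * c j.
have K0 : 0 <= K.
  apply: sumr_ge0 => j _; apply: sumr_ge0 => i _; apply: mulr_ge0 => //.
  by rewrite /c; have := normr_ge0 (x ord0 j); lra.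
pose N := (Num.trunc ((3 * K + 1) / X)).+1.
pose NR : R := N%:R.
have hN : 3 * K + 1 < NR * X.
  rewrite -ltr_pdivrMr //; exact: truncnS_gt.
have NR1 : 1 <= NR by rewrite /NR ler1n.
pose q : 'rV[int]_n := \row_i Num.floor (NR * x ord0 i).
pose f := NR *: x - map_mx intr q.
have fE i : f ord0 i = NR * x ord0 i - (Num.floor (NR * x ord0 i))%:~R.
  by rewrite !mxE.
have hf i : `|f ord0 i| <= 1.
  rewrite fE; have := floor_itv (NR * x ord0 i); rewrite intrD => /andP[h1 h2].
  rewrite ger0_norm; lra.
have hzx j : `|x ord0 j| <= c j by rewrite /c; lra.
have hzf j : `|f ord0 j| <= c j.
  by rewrite /c; have := hf j; have := normr_ge0 (x ord0 j); lra.
have Bfx := rform_bound hf hzx; have Bff := rform_bound hf hzf.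
rewrite -/K in Bfx Bff.
have qE : map_mx intr q = NR *: x + (-1) *: f by rewrite scaleN1r /f opprB addrC subrK.
exists q; rewrite qE; split.
- rewrite quadE // -/X (@rformC _ _ G x f sG).
  have := ler_norm (rform G f x); have := ler_norm (- rform G f x); rewrite normrN.
  have := ler_norm (rform G f f); have := ler_norm (- rform G f f); rewrite normrN.
  move=> a1 a2 a3 a4.
  have p1 : 0 <= (NR - 1) * (NR * X - 2 * K) by apply: mulr_ge0; lra.
  have p2 : NR * rform G f x <= NR * K by apply: ler_wpM2l; lra.
  rewrite sqrrN expr1n; nra.
- rewrite rformDl !rformZl -/X; have := ler_norm (rform G f x); lra.
Qed.
End Approx.


Section Main.
Variable R : realType.
Variables (n m : nat) (G : 'M[int]_n) (H : 'M[int]_m) (P : set 'rV[R]_n).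
Hypothesis eG : even_lattice G.
Hypothesis hG : hyperbolic R G.
Hypothesis eH : even_lattice H.
Hypothesis nH : neg_definite R H.
Hypothesis hP : is_pos_component G P.

Local Notation GM := (gram_sum G H).
Local Notation rt a := (map_mx intr a : 'rV[R]_ _).

Definition PLM : set 'rV[R]_(n + m) :=
  \bigcup_(C in [set y | exists2 x, P x & y = connected_component (pos_cone GM) (emb m x)]) C.

Lemma sG : G^T = G. Proof. by case: eG. Qed.
Lemma dG : \det G != 0. Proof. by case: eG => _ []. Qed.
Lemma sH : H^T = H. Proof. by case: eH. Qed.
Lemma sGM : GM^T = GM.
Proof. by rewrite /gram_sum tr_block_mx !trmx0 sG sH. Qed.

Lemma embE (x y : 'rV[R]_n) : rform GM (emb m x) (emb m y) = rform G x y.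
Proof. by rewrite /emb rform_block rform0l addr0. Qed.

Lemma rowembE (a y : 'rV[R]_n) (b : 'rV[R]_m) : rform GM (row_mx a b) (emb m y) = rform G a y.
Proof. by rewrite /emb rform_block rform0r addr0. Qed.

Lemma nzL (u v : 'rV[R]_n) : 0 < rform G u u -> 0 < rform G v v -> rform G u v != 0.
Proof.
move=> hu hv; apply/eqP => huv.
by have := B1 sG hG hu huv; rewrite leNgt hv.
Qed.

Lemma nzLM (z p : 'rV[R]_(n + m)) : 0 < rform GM z z -> 0 < rform GM p p -> rform GM z p != 0.
Proof.
move=> hz hp; apply/eqP => hzp.
apply: (nopos2 (u := lsubmx z) (v := lsubmx p) hG) => a b hab.
have e : a *: z + b *: p = row_mx (a *: lsubmx z + b *: lsubmx p) (a *: rsubmx z + b *: rsubmx p).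
  by rewrite -{1}(hsubmxK z) -{1}(hsubmxK p) !scale_row_mx add_row_mx.
have := quadE a b z p sGM; rewrite hzp mulr0 addr0 e rform_block.
have := negsemi nH (a *: rsubmx z + b *: rsubmx p).
have : 0 < a ^+ 2 * rform GM z z + b ^+ 2 * rform GM p p.
  case/orP: hab => h.
    have := mulr_gt0 (sqr_pos h) hz; have := mulr_ge0 (sqr_ge0 b) (ltW hp); lra.
  have := mulr_gt0 (sqr_pos h) hp; have := mulr_ge0 (sqr_ge0 a) (ltW hz); lra.
lra.
Qed.

Lemma orth_sq (a b : 'rV[R]_n) (e : R) : rform G a b = 0 ->
  rform G (a + e *: b) (a + e *: b) = rform G a a + e ^+ 2 * rform G b b.
Proof.
move=> hab; rewrite !(rformDl, rformDr, rformZl, rformZr) hab.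
rewrite (rformC _ _ sG : rform G b a = _) hab; ring.
Qed.

Lemma Pdata : exists x0, 0 < rform G x0 x0 /\ P = connected_component (pos_cone G) x0.
Proof. by case: hP => x0 [h1 h2]; exists x0. Qed.

Section WithX0.
Variable x0 : 'rV[R]_n.
Hypothesis hx0 : 0 < rform G x0 x0.
Hypothesis Peq : P = connected_component (pos_cone G) x0.

Lemma Px0 : P x0. Proof. by rewrite Peq; exact: connected_component_refl. Qed.

Lemma HPL p : P p -> forall v, P v <-> (0 < rform G v v /\ 0 < rform G v p).
Proof. rewrite Peq => Cp v; exact: (HPgen sG nzL Cp v). Qed.

Definition C0 := connected_component (pos_cone GM) (emb m x0).

Lemma hC0 : 0 < rform GM (emb m x0) (emb m x0). Proof. by rewrite embE. Qed.

Lemma HPC0 p : C0 p -> forall v, C0 v <-> (0 < rform GM v v /\ 0 < rform GM v p).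
Proof. move=> Cp v; exact: (HPgen sGM nzLM Cp v). Qed.

Lemma C0x0 : C0 (emb m x0).
Proof. apply: connected_component_refl; exact: hC0. Qed.

Lemma embP x : P x -> C0 (emb m x).
Proof.
move=> Px; apply/(HPC0 C0x0); rewrite !embE.
by have := (HPL Px0 x).1 Px.
Qed.

Lemma PLM_C0 z : PLM z <-> C0 z.
Proof.
split.
- move=> [C [x Px ->] Cz].
  exact: connected_component_trans (embP Px) Cz.
- move=> Cz; exists C0 => //; exists x0; [exact: Px0 | by []].
Qed.

Lemma HPLM p : PLM p -> forall v, PLM v <-> (0 < rform GM v v /\ 0 < rform GM v p).
Proof.
move=> /PLM_C0 Cp v; rewrite PLM_C0; exact: HPC0.
Qed.

Lemma hypE x : hyp_space GM PLM (emb m x) <-> hyp_space G P x.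
Proof.
rewrite /hyp_space /= embE; split => -[h1 h2]; split => //.
- have /(HPC0 C0x0) := (PLM_C0 _).1 h1.
  by rewrite !embE => -[a b]; apply/(HPL Px0).
- apply/PLM_C0/(HPC0 C0x0); rewrite !embE.
  exact: (HPL Px0 x).1 h1.
Qed.


Section Q.
Variable q : 'rV[int]_n.
Hypothesis hq2 : 0 < rform G (rt q) (rt q).
Hypothesis hqx0 : 0 < rform G (rt q) x0.
Variable v : 'rV[R]_n.
Hypothesis hv : forall r : 'rV[int]_n, zform G r r != 0 -> rform G (rt r) v != 0.
Variable w : 'rV[R]_m.
Hypothesis hw : forall r : 'rV[int]_m, zform H r r != 0 -> rform H (rt r) w != 0.

Local Notation q' := (rt q).
Definition q2 := rform G q' q'.

Lemma q21 : 1 <= q2.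
Proof. rewrite /q2 rform_int; apply: int_pos_ge1; rewrite -rform_int; exact: hq2. Qed.

Lemma Pq : P q'.
Proof. by apply/(HPL Px0). Qed.

Definition v' := q2 *: v - rform G v q' *: q'.
Lemma v'q : rform G v' q' = 0.
Proof. by rewrite /v' rformBl !rformZl /q2; ring. Qed.
Lemma qv' : rform G q' v' = 0.
Proof. by rewrite (rformC _ _ sG) v'q. Qed.

Local Opaque v'.

Definition nu := - rform G v' v'.
Lemma nu0 : 0 <= nu.
Proof. by rewrite /nu oppr_ge0; exact: (B1 sG hG hq2 qv'). Qed.

Definition eps := (8 * (nu + 1))^-1.
Lemma eps0 : 0 < eps.
Proof. by rewrite /eps invr_gt0; have := nu0; lra. Qed.

Lemma small_coef (t o : R) : 0 <= o -> t = (8 * (o + 1))^-1 -> 48 * (t ^+ 2 * o) < 1.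
Proof.
move=> o0 ->.
have h8 : 0 < 8 * (o + 1) by lra.
have -> : 48 * ((8 * (o + 1))^-1 ^+ 2 * o) = 48 * o / (64 * (o + 1) ^+ 2).
  by field; lra.
rewrite ltr_pdivrMr; last by apply: mulr_gt0 => //; apply: sqr_pos; lra.
have := sqr_ge0 o; nra.
Qed.

Lemma heps : 48 * (eps ^+ 2 * nu) < 1.
Proof. exact: small_coef nu0 erefl. Qed.

Definition u := q' + eps *: v'.
Lemma uq : rform G u q' = q2.
Proof. by rewrite /u rformDl rformZl v'q mulr0 addr0. Qed.
Lemma uu : rform G u u = q2 - eps ^+ 2 * nu.
Proof.
rewrite /u orth_sq ?qv' // /nu /q2; ring.
Qed.
Lemma hu : 0 < rform G u u.
Proof.
rewrite uu; have := q21; have := heps; have := mulr_ge0 (sqr_ge0 eps) nu0; lra.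
Qed.
Lemma Pu : P u.
Proof. by apply/(HPL Pq); rewrite uq; split; [exact: hu | have := q21; lra]. Qed.

Lemma csv (a : 'rV[R]_n) : -2 <= rform G a a -> 1 <= rform G a q' ^+ 2 ->
  rform G a v' ^+ 2 <= 3 * rform G a q' ^+ 2 * nu.
Proof.
move=> ha hY; set Y := rform G a q'; set A := rform G a a; set X := rform G a v'.
pose a'' := q2 *: a + (- Y) *: q'.
have qa : rform G q' a'' = 0.
  by rewrite /a'' rformDr !rformZr (rformC _ _ sG : rform G q' a = _) -/Y /q2; ring.
have av : rform G a'' v' = q2 * X.
  by rewrite /a'' rformDl !rformZl qv' mulr0 addr0.
have aa : rform G a'' a'' = q2 * (q2 * A - Y ^+ 2).
  rewrite /a'' (quadE _ _ _ _ sG) -/A -/q2 -/Y; ring.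
have vv : rform G v' v' <= 0 by have := nu0; rewrite /nu; lra.
have hd : rform G a'' v' ^+ 2 <= rform G a'' a'' * rform G v' v'.
  apply: (@disc R (rform G a'' a'') (rform G a'' v') (rform G v' v') vv) => t.
  rewrite -(quadE _ _ _ _ sG); apply: (B1 sG hG hq2).
  by rewrite rformDr !rformZr qa qv'; ring.
have q20 : 0 < q2 by have := q21; lra.
have e0 : rform G v' v' = - nu by rewrite /nu opprK.
rewrite av aa e0 in hd.
have e1 : (q2 * X) ^+ 2 = q2 * (q2 * X ^+ 2) by ring.
have e2 : q2 * (q2 * A - Y ^+ 2) * - nu = q2 * ((Y ^+ 2 - q2 * A) * nu) by ring.
rewrite e1 e2 ler_pM2l // in hd.
have h2 : q2 * -2 <= q2 * A by rewrite ler_wpM2l // ltW.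
have h3 : (Y ^+ 2 - q2 * A) * nu <= (Y ^+ 2 + 2 * q2) * nu.
  by apply: ler_wpM2r; [exact: nu0 | lra].
have h4 : Y ^+ 2 * nu <= q2 * (Y ^+ 2 * nu).
  by apply: ler_peMl; [exact: (mulr_ge0 (sqr_ge0 _) nu0) | exact: q21].
have h5 : q2 * X ^+ 2 <= q2 * ((Y ^+ 2 + 2) * nu).
  have -> : q2 * ((Y ^+ 2 + 2) * nu) = q2 * (Y ^+ 2 * nu) + 2 * q2 * nu by ring.
  have e3 : (Y ^+ 2 + 2 * q2) * nu = Y ^+ 2 * nu + 2 * q2 * nu by ring.
  rewrite e3 in h3.
  lra.
rewrite ler_pM2l // in h5.
have h6 : nu <= Y ^+ 2 * nu by apply: ler_peMl; [exact: nu0 | exact: hY].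
have -> : 3 * Y ^+ 2 * nu = Y ^+ 2 * nu + 2 * (Y ^+ 2 * nu) by ring.
have e4 : (Y ^+ 2 + 2) * nu = Y ^+ 2 * nu + 2 * nu by ring.
rewrite e4 in h5.
lra.
Qed.


Definition om := - rform H w w.
Lemma om0 : 0 <= om.
Proof. by rewrite /om oppr_ge0; exact: negsemi. Qed.
Definition sc := (8 * (om + 1))^-1.
Lemma sc0 : 0 < sc.
Proof. by rewrite /sc invr_gt0; have := om0; lra. Qed.
Lemma hsc : 48 * (sc ^+ 2 * om) < 1.
Proof. exact: small_coef om0 erefl. Qed.

Lemma csH (b : 'rV[R]_m) : rform H b w ^+ 2 <= rform H b b * rform H w w.
Proof.
apply: (@disc R (rform H b b) (rform H b w) (rform H w w) (negsemi nH w)) => t.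
by rewrite -(quadE _ _ _ _ sH); exact: negsemi.
Qed.

Definition z0 := row_mx u (sc *: w).
Lemma z0E a b : rform GM (row_mx a b) z0 = rform G a u + sc * rform H b w.
Proof. by rewrite /z0 rform_block rformZr. Qed.

Lemma z0z0 : 0 < rform GM z0 z0.
Proof.
rewrite z0E rformZl mulrA -expr2.
have -> : rform H w w = - om by rewrite /om opprK.
have := hu; rewrite uu => h.
have := q21; have := heps; have := hsc; have := mulr_ge0 (sqr_ge0 eps) nu0.
have := mulr_ge0 (sqr_ge0 sc) om0; lra.
Qed.

Lemma z0q : rform GM z0 (emb m q') = q2.
Proof. by rewrite /z0 rowembE uq. Qed.

Lemma PLMq : PLM (emb m q').
Proof. by apply/PLM_C0; apply: embP; exact: Pq. Qed.

Lemma PLMz0 : PLM z0.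
Proof.
apply/(HPLM PLMq); split; first exact: z0z0.
by rewrite z0q; have := q21; lra.
Qed.

Lemma root_sign (a : 'rV[int]_n) (X2 : R) : -2 <= rform G (rt a) (rt a) ->
  rform G (rt a) q' != 0 -> 16 * X2 ^+ 2 < rform G (rt a) q' ^+ 2 ->
  0 < rform G (rt a) q' * (rform G (rt a) u + X2).
Proof.
move=> ha hY hX2.
have Y1 : 1 <= rform G (rt a) q' ^+ 2.
  rewrite rform_int; apply: int_sq_ge1; apply: contra hY => /eqP h.
  by rewrite rform_int h.
have cs := csv ha Y1.
have ue : rform G (rt a) u = rform G (rt a) q' + eps * rform G (rt a) v'.
  by rewrite /u rformDr rformZr.
rewrite ue; apply: sign_pert2 => //.
rewrite exprMn.
have := mulr_ge0 (sqr_ge0 eps) nu0; have := heps.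
have hY2 : 0 < rform G (rt a) q' ^+ 2 by lra.
have : eps ^+ 2 * rform G (rt a) v' ^+ 2 <= eps ^+ 2 * (3 * rform G (rt a) q' ^+ 2 * nu).
  by apply: ler_wpM2l => //; exact: sqr_ge0.
nra.
Qed.

Local Transparent v'.
Lemma v'E (a : 'rV[R]_n) : rform G a q' = 0 -> rform G a v' = q2 * rform G a v.
Proof.
move=> h.
by rewrite /v' rformBr !rformZr h mulr0 subr0.
Qed.
Local Opaque v'.

Lemma rootL (a : 'rV[int]_n) : is_root G a -> rform G (rt a) u != 0.
Proof.
move=> ra.
have aa : rform G (rt a) (rt a) = -2 by rewrite rform_int ra.
have [Y0|Y0] := eqVneq (rform G (rt a) q') 0.
  rewrite /u rformDr rformZr Y0 add0r (v'E Y0) !mulf_neq0 //.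
  - by rewrite gt_eqF // eps0.
  - by have := q21; rewrite gt_eqF //; lra.
  - by apply: hv; rewrite ra.
have : 0 < rform G (rt a) q' * (rform G (rt a) u + 0).
  apply: root_sign; rewrite ?aa // expr0n /= mulr0; exact: sqr_pos.
by rewrite addr0; apply: contraTneq => ->; rewrite mulr0 ltxx.
Qed.

Lemma a_nz (a : 'rV[int]_n) : a != 0 -> 0 <= rform G (rt a) (rt a) ->
  forall z, 0 < rform G z z -> rform G (rt a) z != 0.
Proof.
move=> ha hA z hz; apply/eqP => h.
have h' : rform G z (rt a) = 0 by rewrite (rformC _ _ sG) h.
have := B1 sG hG hz h' => hle.
have h0 : rform G (rt a) (rt a) = 0 by apply/eqP; rewrite eq_le hle hA.
have := B1strict sG hG dG hz h' h0.
by apply/eqP; exact: map_int_neq0.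
Qed.

Lemma zform0 k (K : 'M[int]_k) : zform K 0 0 = 0.
Proof. by rewrite /zform !mul0mx mxE. Qed.

Lemma rt0 k : rt (0 : 'rV[int]_k) = 0.
Proof. by apply/rowP => i; rewrite !mxE. Qed.

Lemma rootLM (r : 'rV[int]_(n + m)) : is_root GM r ->
  [/\ rform GM (rt r) z0 != 0,
      rsubmx r = 0 -> rform GM (rt r) z0 = rform G (rt (lsubmx r)) u &
      rsubmx r != 0 -> lsubmx r != 0 ->
        0 <= rform G (rt (lsubmx r)) (rt (lsubmx r)) /\
        0 < rform G (rt (lsubmx r)) q' * rform GM (rt r) z0].
Proof.
move=> rr.
set a := lsubmx r; set b := rsubmx r.
have rE : rt r = row_mx (rt a) (rt b) by rewrite -{1}(hsubmxK r) map_row_mx.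
have zs : zform G a a + zform H b b = -2 by rewrite -zform_block hsubmxK.
rewrite rE z0E.
have [b0|bn] := eqVneq b 0.
  rewrite b0 rt0 rform0l mulr0 addr0; split; [|by []|by []].
  apply: rootL; rewrite /is_root; move: zs; rewrite b0 zform0 addr0.
  by [].
have zH := zneg nH eH bn.
have A0 : 0 <= rform G (rt a) (rt a).
  rewrite rform_int ler0z; lia.
have [a0|an] := eqVneq a 0.
  rewrite a0 rt0 rform0l add0r; split; [|by move=> b0; rewrite b0 eqxx in bn|by move=> _].
  apply: mulf_neq0; first exact: lt0r_neq0 sc0.
  apply: hw; move: zs; rewrite a0 zform0 add0r => ->; by [].
have Yn := a_nz an A0 hq2.
have key : 0 < rform G (rt a) q' * (rform G (rt a) u + sc * rform H (rt b) w).
  apply: root_sign => //; first lra.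
  have Y1 : 1 <= rform G (rt a) q' ^+ 2.
    rewrite rform_int; apply: int_sq_ge1; apply: contra Yn => /eqP h.
    by rewrite rform_int h.
  have rc := revCS sG hG (rt a) hq2.
  rewrite -/q2 in rc.
  have hb := csH (rt b).
  have Ab : rform G (rt a) (rt a) = - 2 - rform H (rt b) (rt b).
    have zs' : (zform G a a)%:~R + (zform H b b)%:~R = - 2 :> R.
      by rewrite -intrD zs; first [by rewrite rmorphN rmorph_nat | by [] | by rewrite intrN].
    rewrite !rform_int; lra.
  have hA2 : rform G (rt a) (rt a) <= q2 * rform G (rt a) (rt a).
    by apply: ler_peMl => //; exact: q21.
  have beta : - rform H (rt b) (rt b) <= 3 * rform G (rt a) q' ^+ 2 by lra.
  have hw2 : rform H w w = - om by rewrite /om opprK.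
  rewrite hw2 in hb.
  have hb' : rform H (rt b) w ^+ 2 <= (- rform H (rt b) (rt b)) * om by lra.
  have hb3 : rform H (rt b) w ^+ 2 <= 3 * rform G (rt a) q' ^+ 2 * om.
    apply: le_trans hb' _; apply: ler_wpM2r; [exact: om0 | exact: beta].
  have hsc2 := hsc.
  rewrite exprMn.
  have : sc ^+ 2 * rform H (rt b) w ^+ 2 <= sc ^+ 2 * (3 * rform G (rt a) q' ^+ 2 * om).
    by apply: ler_wpM2l => //; exact: sqr_ge0.
  have := mulr_ge0 (sqr_ge0 sc) om0.
  have hY2 : 0 < rform G (rt a) q' ^+ 2 by lra.
  nra.
split.
- by apply: contraTneq key => ->; rewrite mulr0 ltxx.
- by move=> b0; rewrite b0 eqxx in bn.
- by move=> _ _; split.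
Qed.


Definition x1 := nrm G u.
Definition z1 := nrm GM z0.

Lemma Cx1 : chamber_domain G P x1.
Proof.
split; first split.
- apply/(HPL Pq); rewrite (nrm_sq hu); split; first exact: ltr01.
  rewrite nrm_l uq; apply: mulr_gt0; first exact: nrm_coef_gt0 hu.
  by have := q21; lra.
- exact: nrm_sq hu.
- move=> r hr; rewrite nrm_r mulf_neq0 //; first exact: lt0r_neq0 (nrm_coef_gt0 hu).
  exact: rootL.
Qed.

Lemma Cz1 : chamber_domain GM PLM z1.
Proof.
split; first split.
- apply/(HPLM PLMq); rewrite (nrm_sq z0z0); split; first exact: ltr01.
  rewrite nrm_l z0q; apply: mulr_gt0; first exact: nrm_coef_gt0 z0z0.
  by have := q21; lra.
- exact: nrm_sq z0z0.
- move=> r hr; rewrite nrm_r mulf_neq0 //; first exact: lt0r_neq0 (nrm_coef_gt0 z0z0).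
  by have [] := rootLM hr.
Qed.

Lemma signP (a : 'rV[int]_n) : a != 0 -> 0 <= rform G (rt a) (rt a) ->
  forall x, P x -> 0 < rform G (rt a) q' * rform G (rt a) x.
Proof.
move=> an A0 x Px.
have Yn := a_nz an A0 hq2.
set Y := rform G (rt a) q'.
have fE z : rform G (Y *: rt a) z = Y * rform G (rt a) z by rewrite rformZl.
rewrite -fE.
have Pc : connected P by rewrite Peq; exact: component_connected.
have nzP : forall z, P z -> rform G (Y *: rt a) z != 0.
  move=> z Pz; rewrite fE mulf_neq0 //; apply: a_nz => //.
  by have [] := (HPL Px0 z).1 Pz.
apply: (@conn_sign R _ P (fun z => rform G (Y *: rt a) z) Pc (@cont_rform_r R n G (Y *: rt a)) nzP q' x Pq Px).
by rewrite fE -expr2; exact: sqr_pos.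
Qed.

Lemma main_Q : exists (DL : set 'rV[R]_n) (DLM : set 'rV[R]_(n + m)),
    is_chamber G P DL /\ is_chamber GM PLM DLM /\
    forall x : 'rV[R]_n,
      closure_in (hyp_space G P) DL x <-> closure_in (hyp_space GM PLM) DLM (emb m x).
Proof.
exists (connected_component (chamber_domain G P) x1),
       (connected_component (chamber_domain GM PLM) z1).
split; first by exists x1; split => //; exact: Cx1.
split; first by exists z1; split => //; exact: Cz1.
have c1 := nrm_coef_gt0 hu; have c2 := nrm_coef_gt0 z0z0.
have key x : hyp_space G P x ->
  (closure (connected_component (chamber_domain G P) x1) x <->
   closure (connected_component (chamber_domain GM PLM) z1) (emb m x)).
  move=> hx; have hx' := (hypE x).2 hx.
  rewrite (chamber_closure sG HPL Cx1 hx) (chamber_closure sGM HPLM Cz1 hx').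
  split => h r hr.
  - have zs : zform G (lsubmx r) (lsubmx r) + zform H (rsubmx r) (rsubmx r) = -2.
      by rewrite -zform_block hsubmxK.
    have [nz0 hb0 hbn] := rootLM hr.
    have rE : rt r = row_mx (rt (lsubmx r)) (rt (rsubmx r)).
      by rewrite -{1}(hsubmxK r) map_row_mx.
    rewrite [in rform GM _ (emb m x)]rE rowembE nrm_r -mulrA pmulr_rge0 //.
    have [b0|bn] := eqVneq (rsubmx r) 0.
      rewrite hb0 //.
      have ra : is_root G (lsubmx r) by move: zs; rewrite b0 zform0 addr0.
      by have := h _ ra; rewrite nrm_r -mulrA pmulr_rge0.
    have [a0|an] := eqVneq (lsubmx r) 0.
      by rewrite a0 rt0 rform0l mulr0.
    have [A0 pos] := hbn bn an.
    have sx := signP an A0 hx.1.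
    apply: ltW.
    have Yn : rform G (rt (lsubmx r)) q' != 0.
      by apply: contraTneq pos => ->; rewrite mul0r ltxx.
    have := mulr_gt0 pos sx.
    set Y := rform G (rt (lsubmx r)) q'.
    set E := rform GM (rt r) z0.
    set Bx := rform G (rt (lsubmx r)) x.
    have -> : Y * E * (Y * Bx) = Y ^+ 2 * (E * Bx) by ring.
    by rewrite pmulr_rgt0 //; exact: sqr_pos.
  - have rr : is_root GM (row_mx r 0) by rewrite /is_root zform_block zform0 addr0.
    have := h _ rr.
    rewrite map_row_mx rt0 rowembE nrm_r [rform GM (row_mx _ 0) z0]z0E rform0l mulr0 addr0 -mulrA pmulr_rge0 //.
    by move=> hh; rewrite nrm_r -mulrA pmulr_rge0.
move=> x; split => -[cx hx].
- have hx' := (hypE x).2 hx.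
  by split; [exact: (key x hx).1 cx | exact: hx'].
- have hx' := (hypE x).1 hx.
  by split; [exact: (key x hx').2 cx | exact: hx'].
Qed.

End Q.

End WithX0.
End Main.


Unset Implicit Arguments.

Theorem lemma2p5 (R : realType) (n m : nat) (G : 'M[int]_n) (H : 'M[int]_m)
    (P : set 'rV[R]_n) :
  even_lattice G -> hyperbolic R G ->
  even_lattice H -> neg_definite R H ->
  is_pos_component G P ->
  let GM := gram_sum G H in
  let PM := [set y | exists2 x, P x & y = connected_component (pos_cone GM) (emb m x)] in
  let PLM := \bigcup_(C in PM) C in
  exists (DL : set 'rV[R]_n) (DLM : set 'rV[R]_(n + m)),
    is_chamber G P DL /\ is_chamber GM PLM DLM /\
    forall x : 'rV[R]_n,
      closure_in (hyp_space G P) DL x <->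
      closure_in (hyp_space GM PLM) DLM (emb m x).
Proof.
move=> eG hG eH nH hP GM PM PLM0.
have [x0 [hx0 Peq]] := Pdata hP.
have [q [hq2 hqx0]] := int_approx (sG eG) hx0.
have [v hv] := generic_vec R G.
have [w hw] := generic_vec R H.
exact: (main_Q eG hG eH nH hx0 Peq hq2 hqx0 hv hw).
Qed.
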